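(* Suppose $D_{KL}(\hat{\mathsf p}_k\,\|\,\hat\pi_k)\le\epsilon_k<\infty$ for each $k$. Then the linearized game with payoff $\tilde L(\lambda,g)=\sum_{k=1}^p\lambda_kD_{KL}(\hat{\mathsf p}_k\,\|\,\pi_g)$ on $\Delta\times\mathcal G_1$ admits a saddle point $(\lambda^*,g^* )$, i.e. $\tilde L(\lambda,g^* )\le\tilde L(\lambda^*,g^* )\le\tilde L(\lambda^*,g)$ for all $\lambda\in\Delta$, $g\in\mathcal G_1$. Moreover, for any such saddle point and every $\lambda\in\Delta$, $$D_{KL}(\hat{\mathsf p}_\lambda\,\|\,\pi_{g^*})\le\log\Big(\sum_{k=1}^pe^{\epsilon_k}\Big)-H^{\lambda^*}_\sigma(K|X)-D^{\lambda}_{JSD}(\hat{\mathsf p}_1,\dots,\hat{\mathsf p}_p),$$ where $\sigma_k=e^{\epsilon_k}/\sum_{j=1}^pe^{\epsilon_j}$, $\pi_\sigma=\sum_{k=1}^p\sigma_k\hat\pi_k$, and $$H^{\lambda^*}_\sigma(K|X)=\sum_{k=1}^p\lambda^*_k\,\mathbb E_{x\sim\hat{\mathsf p}_k}\Big[-\log\frac{\sigma_k\hat\pi_k(x)}{\pi_\sigma(x)}\Big].$$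
   Context: Fix an integer $p\ge 1$, $[1,p]=\{1,\dots,p\}$, $\Delta=\{\lambda\in\mathbb R^p:\lambda_k\ge 0,\ \sum_k\lambda_k=1\}$. Let $\hat{\mathsf p}_1,\dots,\hat{\mathsf p}_p$ be probability distributions with finite supports, $\mathcal X_0=\bigcup_k\mathrm{supp}(\hat{\mathsf p}_k)$, and $\hat\pi_1,\dots,\hat\pi_p$ probability distributions on $\mathcal X_0$. A gate is $g:\mathcal X_0\times[1,p]\to[0,1]$ with $\sum_kg(x,k)=1$ for each $x$; $\pi_g(x)=\sum_kg(x,k)\hat\pi_k(x)$, $Z_g=\sum_{x\in\mathcal X_0}\pi_g(x)$, $\mathcal G_1=\{g:Z_g=1\}$. For $\lambda\in\Delta$, $\hat{\mathsf p}_\lambda=\sum_k\lambda_k\hat{\mathsf p}_k$. $D_{KL}(P\|Q)=\sum_xP(x)\log\frac{P(x)}{Q(x)}\in[0,\infty]$ with conventions $0\log\frac0q=0$, $a\log\frac a0=+\infty$ for $a>0$. The Jensen–Shannon divergence is $D^\lambda_{JSD}(\hat{\mathsf p}_1,\dots,\hat{\mathsf p}_p)=\sum_{k=1}^p\lambda_kD_{KL}(\hat{\mathsf p}_k\,\|\,\hat{\mathsf p}_\lambda)$. *)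

(* Defs.v *)
From HB Require Import structures.
From mathcomp Require Import all_boot all_order all_algebra.
From mathcomp Require Import all_classical all_reals all_analysis.
Set Implicit Arguments. Unset Strict Implicit. Unset Printing Implicit Defensive.
Import Order.TTheory GRing.Theory Num.Theory.
Local Open Scope ring_scope.

Section Defs.
Context {R : realType} {T : finType} {p : nat}.

Definition is_distr (P : T -> R) : Prop :=
  (forall x, 0 <= P x) /\ \sum_x P x = 1.

(* Kullback-Leibler divergence with values in [0, +oo]:
   0 log (0/q) = 0, a log (a/0) = +oo for a > 0 *)
Definition KL (P Q : T -> R) : \bar R :=
  if [exists x, (0 < P x) && (Q x == 0)] then +oo%E
  else (\sum_(x | 0 < P x) P x * ln (P x / Q x))%:E.

Definition simplex (l : 'I_p -> R) : Prop :=
  (forall k, 0 <= l k) /\ \sum_k l k = 1.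

Definition X0 (ph : 'I_p -> T -> R) : {set T} :=
  [set x | [exists k, 0 < ph k x]].

Definition distr_on (A : {set T}) (P : T -> R) : Prop :=
  (forall x, 0 <= P x) /\ (forall x, x \notin A -> P x = 0) /\
  \sum_(x in A) P x = 1.

(* a gate g : X_0 x [1,p] -> [0,1] with sum_k g(x,k) = 1 (values outside
   X_0 are irrelevant) *)
Definition is_gate (ph : 'I_p -> T -> R) (g : T -> 'I_p -> R) : Prop :=
  forall x, x \in X0 ph ->
    (forall k, 0 <= g x k <= 1) /\ \sum_k g x k = 1.

Definition pi_g (pih : 'I_p -> T -> R) (g : T -> 'I_p -> R) (x : T) : R :=
  \sum_k g x k * pih k x.

Definition Z_g (ph pih : 'I_p -> T -> R) (g : T -> 'I_p -> R) : R :=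
  \sum_(x in X0 ph) pi_g pih g x.

Definition G1 (ph pih : 'I_p -> T -> R) (g : T -> 'I_p -> R) : Prop :=
  is_gate ph g /\ Z_g ph pih g = 1.

Definition mix (l : 'I_p -> R) (ph : 'I_p -> T -> R) (x : T) : R :=
  \sum_k l k * ph k x.

Definition Ltilde (ph pih : 'I_p -> T -> R) (l : 'I_p -> R)
  (g : T -> 'I_p -> R) : \bar R :=
  (\sum_(k < p) (l k)%:E * KL (ph k) (pi_g pih g))%E.

Definition saddle (ph pih : 'I_p -> T -> R) (lstar : 'I_p -> R)
  (gstar : T -> 'I_p -> R) : Prop :=
  [/\ simplex lstar, G1 ph pih gstar,
      (forall l, simplex l -> (Ltilde ph pih l gstar <= Ltilde ph pih lstar gstar)%E)
    & (forall g, G1 ph pih g -> (Ltilde ph pih lstar gstar <= Ltilde ph pih lstar g)%E)].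

Definition JSD (l : 'I_p -> R) (ph : 'I_p -> T -> R) : \bar R :=
  (\sum_(k < p) (l k)%:E * KL (ph k) (mix l ph))%E.

Definition sigma (eps : 'I_p -> R) (k : 'I_p) : R :=
  expR (eps k) / \sum_j expR (eps j).

(* H^{lambda}_sigma(K|X) = sum_k lambda_k E_{x~hat p_k}[-log(sigma_k pih_k(x)/pi_sigma(x))],
   where pi_sigma = mix sigma pih; -log 0 = +oo *)
Definition Hcond (l eps : 'I_p -> R) (ph pih : 'I_p -> T -> R) : \bar R :=
  (\sum_(k < p) (l k)%:E *
     \sum_(x | (0 < ph k x)%R) (ph k x)%:E *
        (if (pih k x == 0)%R then +oo
         else (- ln (sigma eps k * pih k x / mix (sigma eps) pih x))%R%:E))%E.

End Defs.

(* Main.v *)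
Require Import Defs.
From HB Require Import structures.
From mathcomp Require Import all_boot all_order all_algebra.
From mathcomp Require Import all_classical all_reals all_analysis.
From mathcomp Require Import ring lra.
Import Order.TTheory GRing.Theory Num.Theory.
Import numFieldTopology.Exports.
Set Implicit Arguments. Unset Strict Implicit. Unset Printing Implicit Defensive.
Local Open Scope classical_set_scope.
Local Open Scope ring_scope.

Section Fan.
Variable R : realType.

Lemma two_fun (V : Type) (C : set V) (f g : V -> R) (v : R) :
  (forall a b, C a -> C b -> forall s, 0 <= s <= 1 -> exists z, C z /\
      f z <= (1-s) * f a + s * f b /\ g z <= (1-s) * g a + s * g b) ->
  (forall c, C c -> v <= f c \/ v <= g c) ->
  exists t, 0 <= t <= 1 /\ forall c, C c -> v <= t * f c + (1-t) * g c.
Proof.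
move=> cvx cov.
pose S := [set r : R | r = 0 \/ exists c, C c /\ g c < v /\ r = (v - g c) / (f c - g c)].
have S0 : S 0 by left.
have Sub : ubound S 1.
  move=> r [->|[c [Cc [gv ->]]]]; first by lra.
  have fv : v <= f c by case: (cov c Cc) => // h; lra.
  by rewrite ler_pdivrMr; lra.
have hS : has_sup S by split; [exists 0|exists 1].
have key : forall c d, C c -> C d -> f c < v -> g d < v ->
    (v - f c) * (v - g d) <= (g c - v) * (f d - v).
  move=> c d Cc Cd fc gd.
  have gc : v <= g c by case: (cov c Cc) => // h; lra.
  have fd : v <= f d by case: (cov d Cd) => // h; lra.
  rewrite leNgt; apply/negP => H.
  set a := v - f c; set b := g c - v; set cc := f d - v; set dd := v - g d.
  have D0 : 0 < a + b + cc + dd by rewrite /a /b /cc /dd; lra.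
  set s := (a + b) / (a + b + cc + dd).
  have s01 : 0 <= s <= 1.
    rewrite /s; apply/andP; split; first by apply: divr_ge0; rewrite /a /b /cc /dd; lra.
    by rewrite ler_pdivrMr //; rewrite /a /b /cc /dd; lra.
  have [z [Cz [fz gz]]] := cvx c d Cc Cd s s01.
  have e1 : (1-s) * f c + s * f d - v = (b * cc - a * dd) / (a + b + cc + dd).
    rewrite /s /a /b /cc /dd; field; rewrite -/a -/b -/cc -/dd; lra.
  have e2 : (1-s) * g c + s * g d - v = (cc * b - a * dd) / (a + b + cc + dd).
    rewrite /s /a /b /cc /dd; field; rewrite -/a -/b -/cc -/dd; lra.
  have n1 : (b * cc - a * dd) / (a + b + cc + dd) < 0.
    by rewrite pmulr_llt0 ?invr_gt0 // /a /b /cc /dd; lra.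
  have n2 : (cc * b - a * dd) / (a + b + cc + dd) < 0.
    by rewrite pmulr_llt0 ?invr_gt0 // /a /b /cc /dd; nra.
  by case: (cov z Cz) => h; lra.
exists (sup S); split.
  apply/andP; split; first exact: sup_upper_bound.
  by apply: ge_sup => //; exists 0.
move=> c Cc.
have [fc|fc] := ltP (f c) v.
- have gc : v <= g c by case: (cov c Cc) => // h; lra.
  have ub : ubound S ((g c - v) / (g c - f c)).
    move=> r [->|[d [Cd [gd ->]]]].
      by apply: divr_ge0; lra.
    have fd : v <= f d by case: (cov d Cd) => // h; lra.
    have := key c d Cc Cd fc gd => k.
    rewrite ler_pdivrMr; last lra.
    rewrite mulrAC ler_pdivlMr; last lra.
    nra.
  have := ge_sup (ex_intro _ 0 S0) ub.
  rewrite ler_pdivlMr; last lra.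
  set t := sup S; nra.
- have [gc|gc] := ltP (g c) v.
  + have Sc : S ((v - g c) / (f c - g c)) by right; exists c.
    have := sup_upper_bound hS Sc.
    rewrite ler_pdivrMr; last lra.
    set t := sup S; nra.
  + have t0 : 0 <= sup S by apply: sup_upper_bound.
    have t1 : sup S <= 1 by apply: ge_sup => //; exists 0.
    have h1 : 0 <= sup S * (f c - v) by apply: mulr_ge0; lra.
    have h2 : 0 <= (1 - sup S) * (g c - v) by apply: mulr_ge0; lra.
    nra.
Qed.


Lemma fan (V : Type) (n : nat) : forall (C : set V) (F : nat -> V -> R) (v : R),
  (forall a b, C a -> C b -> forall s, 0 <= s <= 1 -> exists z, C z /\
     forall k, (k < n.+1)%N -> F k z <= (1-s) * F k a + s * F k b) ->
  (forall c, C c -> exists k, (k < n.+1)%N /\ v <= F k c) ->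
  exists l : nat -> R, (forall k, 0 <= l k) /\ \sum_(k < n.+1) l k = 1 /\
    forall c, C c -> v <= \sum_(k < n.+1) l k * F k c.
Proof.
elim: n => [|n IH] C F v cvx cov.
  exists (fun k => if k == 0%N then 1 else 0); split.
    by move=> k; case: ifP.
  split; first by rewrite big_ord1.
  move=> c Cc; rewrite big_ord1 /= mul1r.
  by have [k [+ +]] := cov c Cc; rewrite ltnS leqn0 => /eqP ->.
pose C' := [set c | C c /\ F n.+1 c < v].
have [mu [mu0 [mu1 muC]]] : exists l : nat -> R, (forall k, 0 <= l k) /\
    \sum_(k < n.+1) l k = 1 /\ forall c, C' c -> v <= \sum_(k < n.+1) l k * F k c.
  apply: IH.
    move=> a b [Ca Fa] [Cb Fb] s s01.
    have [z [Cz Fz]] := cvx a b Ca Cb s s01.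
    exists z; split; last by move=> k kn; apply: Fz; apply: ltnW.
    split => //; have := Fz n.+1 (ltnSn _).
    have h1 : (1 - s) * F n.+1 a <= (1 - s) * v.
      by apply: ler_wpM2l; lra.
    have h2 : s * F n.+1 b <= s * v by apply: ler_wpM2l; lra.
    have [s0|s0] := eqVneq s 0.
      by rewrite s0 !mul0r subr0 !mul1r addr0; lra.
    have h3 : s * F n.+1 b < s * v.
      by rewrite ltr_pM2l //; case/andP: s01 => s0' _; rewrite lt_def s0.
    lra.
  move=> c [Cc Fc]; have [k [kn vk]] := cov c Cc.
  exists k; split => //; rewrite ltnS leq_eqVlt in kn.
  case/orP: kn => [/eqP kn|//]; by rewrite kn in vk; lra.
pose f c := \sum_(k < n.+1) mu k * F k c.
have [t [t01 tC]] : exists t, 0 <= t <= 1 /\ forall c, C c -> v <= t * f c + (1-t) * F n.+1 c.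
  apply: two_fun.
    move=> a b Ca Cb s s01; have [z [Cz Fz]] := cvx a b Ca Cb s s01.
    exists z; split => //; split; last exact: Fz.
    rewrite /f mulr_sumr mulr_sumr -big_split /=; apply: ler_sum => k _.
    rewrite mulrCA (mulrCA s) -mulrDr; apply: ler_wpM2l => //.
    by apply: Fz; apply: (ltn_trans (ltn_ord k)).
  move=> c Cc; have [Fc|Fc] := ltP (F n.+1 c) v; last by right.
  by left; apply: muC.
exists (fun k => if (k < n.+1)%N then t * mu k else if k == n.+1 then 1 - t else 0).
split.
  move=> k; case: ifP => _; first by apply: mulr_ge0 => //; lra.
  by case: ifP => _; lra.
split.
  rewrite big_ord_recr /= ltnn eqxx.
  under eq_bigr => k _ do rewrite (ltn_ord k).
  by rewrite -mulr_sumr mu1; lra.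
move=> c Cc; rewrite big_ord_recr /= ltnn eqxx.
under eq_bigr => k _ do rewrite (ltn_ord k) -mulrA.
by rewrite -mulr_sumr; apply: tC.
Qed.

End Fan.

Section Top.
Variable R : realType.
Variable U : eqType.
Notation W := (prod_topology (fun _ : U => R)).

Lemma min_exists (K : set W) (Phi : W -> R) :
  K !=set0 -> closed K -> K `<=` [set G | forall u, 0 <= G u <= 1] ->
  (forall G, K G -> {for G, continuous Phi}) ->
  exists G0, K G0 /\ forall G, K G -> Phi G0 <= Phi G.
Proof.
move=> K0 Kcl Kbox Kc.
have cb : compact [set G : W | forall u, `[0, 1]%classic (G u)].
  exact: (@tychonoff U (fun _ => R) (fun _ => `[0, 1]%classic) (fun _ => @segment_compact R 0 1)).
have cK : compact K.
  apply: (subclosed_compact Kcl cb) => G /Kbox HG u /=.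
  by rewrite in_itv /=; apply: HG.
have cont : {within K, continuous Phi}.
  by apply: continuous_in_subspaceT => G /set_mem; apply: Kc.
have [G0 G0K G0min] := compact_EVT_min K0 cK cont.
exists G0; split; first by move: G0K; rewrite inE.
by move=> G KG; apply: G0min; rewrite inE.
Qed.

Lemma cont_proj (u : U) (G : W) : {for G, continuous (fun H : W => H u)}.
Proof. exact: (@proj_continuous U (fun _ => R) u G). Qed.

Lemma cont_sum (I : Type) (r : seq I) (P : pred I) (F : I -> W -> R) (G : W) :
  (forall i, P i -> {for G, continuous (F i)}) ->
  {for G, continuous (fun H => \sum_(i <- r | P i) F i H)}.
Proof.
move=> HF; elim: r => [|i r IH].
  have -> : (fun H : W => \sum_(i <- [::] | P i) F i H) = (fun _ => 0).
    by apply: funext => H; rewrite big_nil.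
  exact: cst_continuous.
case Pi: (P i).
  have -> : (fun H : W => \sum_(j <- i :: r | P j) F j H) =
     (fun H => F i H + \sum_(j <- r | P j) F j H).
    by apply: funext => H; rewrite big_cons Pi.
  exact: (continuousD (HF i Pi) IH).
have -> : (fun H : W => \sum_(j <- i :: r | P j) F j H) =
   (fun H => \sum_(j <- r | P j) F j H).
  by apply: funext => H; rewrite big_cons Pi.
exact: IH.
Qed.

Lemma cont_mul (f g : W -> R) (G : W) :
  {for G, continuous f} -> {for G, continuous g} ->
  {for G, continuous (fun H => f H * g H)}.
Proof. move=> hf hg; exact: (continuousM hf hg). Qed.

Lemma cont_cst (c : R) (G : W) : {for G, continuous (fun _ : W => c)}.
Proof. exact: cst_continuous. Qed.

Lemma cont_inv (f : W -> R) (G : W) : f G != 0 ->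
  {for G, continuous f} -> {for G, continuous (fun H => (f H)^-1)}.
Proof. move=> h hf; exact: (continuousV h hf). Qed.

Lemma cont_ln (f : W -> R) (G : W) : 0 < f G ->
  {for G, continuous f} -> {for G, continuous (fun H => ln (f H))}.
Proof.
move=> h hf; exact: (continuous_comp hf (continuous_ln h)).
Qed.

Lemma cont_max (f g : W -> R) (G : W) :
  {for G, continuous f} -> {for G, continuous g} ->
  {for G, continuous (fun H => Num.max (f H) (g H))}.
Proof. move=> hf hg; exact: (continuous_max hf hg). Qed.

Lemma closed_pre (f : W -> R) (D : set R) : (forall G, {for G, continuous f}) ->
  closed D -> closed [set G | D (f G)].
Proof.
move=> hf cD; apply: (@preimage_closed _ _ f D) => // G _; exact: hf.
Qed.


Lemma cont_bigmax (I : Type) (r : seq I) (F : I -> W -> R) (f0 : W -> R) (G : W) :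
  {for G, continuous f0} -> (forall i, {for G, continuous (F i)}) ->
  {for G, continuous (fun H => \big[Num.max/f0 H]_(i <- r) F i H)}.
Proof.
move=> h0 HF; elim: r => [|i r IH].
  have -> : (fun H : W => \big[Num.max/f0 H]_(i <- [::]) F i H) = f0.
    by apply: funext => H; rewrite big_nil.
  exact: h0.
have -> : (fun H : W => \big[Num.max/f0 H]_(j <- i :: r) F j H) =
   (fun H => Num.max (F i H) (\big[Num.max/f0 H]_(j <- r) F j H)).
  by apply: funext => H; rewrite big_cons.
exact: cont_max.
Qed.

Lemma closed_forall (I : Type) (P : I -> Prop) (f : I -> set W) :
  (forall i, P i -> closed (f i)) -> closed [set G | forall i, P i -> f i G].
Proof.
move=> h.
have -> : [set G | forall i, P i -> f i G] = \bigcap_(i in P) f i.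
  by apply/seteqP; split => G /=.
exact: closed_bigI.
Qed.


Lemma closed_all (I : Type) (f : I -> set W) :
  (forall i, closed (f i)) -> closed [set G | forall i, f i G].
Proof.
move=> h.
have -> : [set G | forall i, f i G] = \bigcap_(i in setT) f i.
  by apply/seteqP; split => G /=; [move=> H i _|move=> H i; apply: H].
exact: closed_bigI.
Qed.

End Top.

Section Basics.
Variable R : realType.

Lemma ln_le_sub1 (x : R) : 0 < x -> ln x <= x - 1.
Proof.
move=> x0; have := @le_ln1Dx R (x - 1); rewrite addrCA subrr addr0; apply; lra.
Qed.

Lemma ln_concave (a b s : R) : 0 < a -> 0 < b -> 0 <= s <= 1 ->
  (1 - s) * ln a + s * ln b <= ln ((1 - s) * a + s * b).
Proof.
move=> a0 b0 /andP[s0 s1].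
set m := (1 - s) * a + s * b.
have m0 : 0 < m.
  rewrite /m; have [->|s1'] := eqVneq s 1.
    by rewrite subrr mul0r add0r mul1r.
  have h1 : 0 < (1 - s) * a.
    by apply: mulr_gt0 => //; rewrite subr_gt0 lt_neqAle s1' s1.
  have h2 : 0 <= s * b by apply: mulr_ge0 => //; apply: ltW.
  lra.
have ha : ln a - ln m <= a / m - 1.
  by rewrite -ln_div ?posrE //; apply: ln_le_sub1; apply: divr_gt0.
have hb : ln b - ln m <= b / m - 1.
  by rewrite -ln_div ?posrE //; apply: ln_le_sub1; apply: divr_gt0.
have e : (1 - s) * (a / m) + s * (b / m) = 1.
  by rewrite !mulrA -mulrDl divff // lt0r_neq0.
have h1 := ler_wpM2l (_ : 0 <= 1 - s) ha.
have h2 := ler_wpM2l s0 hb.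
have : 0 <= 1 - s by lra.
move=> /h1 {}h1; nra.
Qed.


Variable T : finType.

Definition kl (P Q : T -> R) : R := \sum_(x | 0 < P x) P x * ln (P x / Q x).

Lemma KL_fin (P Q : T -> R) : (forall x, 0 < P x -> Q x != 0) ->
  KL P Q = (kl P Q)%:E.
Proof.
move=> H; rewrite /KL; case: ifP => // /existsP [x /andP [Px /eqP Qx]].
by have := H x Px; rewrite Qx eqxx.
Qed.

Lemma KL_inf (P Q : T -> R) x : 0 < P x -> Q x = 0 -> KL P Q = +oo%E.
Proof.
move=> Px Qx; rewrite /KL.
have -> : [exists x, (0 < P x) && (Q x == 0)] by apply/existsP; exists x; rewrite Px Qx eqxx.
by [].
Qed.

Lemma kl_convex (P Q1 Q2 : T -> R) s :
  (forall x, 0 < P x -> 0 < Q1 x /\ 0 < Q2 x) -> 0 <= s <= 1 ->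
  kl P (fun x => (1 - s) * Q1 x + s * Q2 x) <= (1 - s) * kl P Q1 + s * kl P Q2.
Proof.
move=> HQ s01; rewrite /kl !mulr_sumr -big_split /=; apply: ler_sum => x Px.
have [q1 q2] := HQ x Px.
have M0 : 0 < (1 - s) * Q1 x + s * Q2 x.
  case/andP: s01 => s0 s1.
  have h1 : 0 <= (1 - s) * Q1 x by apply: mulr_ge0; lra.
  have h2 : 0 <= s * Q2 x by apply: mulr_ge0 => //; apply: ltW.
  have [->|sn] := eqVneq s 0; first by rewrite subr0 mul1r mul0r addr0.
  have : 0 < s * Q2 x by apply: mulr_gt0 => //; rewrite lt_neqAle eq_sym sn.
  lra.
rewrite !ln_div ?posrE //.
have hc := ln_concave q1 q2 s01.
have := ler_wpM2l (ltW Px) hc.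
nra.
Qed.

End Basics.

Section Main.
Variables (R : realType) (T : finType) (p : nat) (ph pih : 'I_p -> T -> R)
  (eps : 'I_p -> R).
Hypotheses (p0 : (0 < p)%N) (hph : forall k, is_distr (ph k))
  (hpih : forall k, distr_on (X0 ph) (pih k))
  (heps : forall k, (KL (ph k) (pih k) <= (eps k)%:E)%E).

Lemma ph_ge0 k x : 0 <= ph k x.
Proof. by case: (hph k). Qed.

Lemma pih_ge0 k x : 0 <= pih k x.
Proof. by case: (hpih k). Qed.

Lemma inX0 k x : 0 < ph k x -> x \in X0 ph.
Proof. by move=> h; rewrite inE; apply/existsP; exists k. Qed.

Lemma notX0_ph k x : x \notin X0 ph -> ph k x = 0.
Proof.
move=> h; have := ph_ge0 k x; rewrite le_eqVlt => /orP[/eqP <-//|/inX0 hx].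
by rewrite hx in h.
Qed.

Lemma notX0_pih k x : x \notin X0 ph -> pih k x = 0.
Proof. by move=> h; case: (hpih k) => _ [+ _]; apply. Qed.

Lemma pih_pos k x : 0 < ph k x -> 0 < pih k x.
Proof.
move=> hx; rewrite lt_neqAle pih_ge0 andbT eq_sym; apply/eqP => h0.
by have := heps k; rewrite (KL_inf hx h0).
Qed.

Definition Fk k g := kl (ph k) (pi_g pih g).
Definition good g := G1 ph pih g /\ forall x, x \in X0 ph -> 0 < pi_g pih g x.

Lemma pig_ge0 g : is_gate ph g -> forall x, x \in X0 ph -> 0 <= pi_g pih g x.
Proof.
move=> hg x hx; rewrite /pi_g; apply: sumr_ge0 => k _.
apply: mulr_ge0; last exact: pih_ge0.
by case: (hg x hx) => /(_ k) /andP[].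
Qed.

Lemma pig_out g x : x \notin X0 ph -> pi_g pih g x = 0.
Proof. by move=> h; rewrite /pi_g big1 // => k _; rewrite notX0_pih // mulr0. Qed.

Lemma pig_le1 g : G1 ph pih g -> forall x, x \in X0 ph -> pi_g pih g x <= 1.
Proof.
move=> [hg hZ] x hx; rewrite -hZ /Z_g (bigD1 x) //= lerDl.
by apply: sumr_ge0 => y /andP[hy _]; apply: pig_ge0.
Qed.

Lemma KL_good g k : good g -> KL (ph k) (pi_g pih g) = (Fk k g)%:E.
Proof.
move=> [_ hg]; apply: KL_fin => x hx.
by rewrite lt0r_neq0 // hg //; apply: inX0 hx.
Qed.

Lemma Ltilde_good l g : good g ->
  Ltilde ph pih l g = (\sum_k l k * Fk k g)%:E.
Proof.
move=> hg; rewrite /Ltilde -sumEFin; apply: eq_bigr => k _.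
by rewrite KL_good // EFinM.
Qed.

Definition mixg (s : R) (a b : T -> 'I_p -> R) : T -> 'I_p -> R :=
  fun x k => (1 - s) * a x k + s * b x k.

Lemma pig_mix s a b x :
  pi_g pih (mixg s a b) x = (1 - s) * pi_g pih a x + s * pi_g pih b x.
Proof.
rewrite /pi_g /mixg !mulr_sumr -big_split; apply: eq_bigr => k _ /=.
by rewrite mulrDl !mulrA.
Qed.

Lemma G1_mix s a b : 0 <= s <= 1 -> G1 ph pih a -> G1 ph pih b ->
  G1 ph pih (mixg s a b).
Proof.
move=> /andP[s0 s1] [ga Za] [gb Zb]; split.
  move=> x hx; have [ga1 ga2] := ga x hx; have [gb1 gb2] := gb x hx; split.
    move=> k; have /andP[a0 a1] := ga1 k; have /andP[b0 b1] := gb1 k.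
    rewrite /mixg; apply/andP; split; nra.
  by rewrite /mixg big_split /= -!mulr_sumr ga2 gb2; lra.
rewrite /Z_g; under eq_bigr => x _ do rewrite pig_mix.
by rewrite big_split /= -!mulr_sumr -!/(Z_g _ _ _) Za Zb; lra.
Qed.

Lemma good_mix s a b : 0 <= s <= 1 -> good a -> good b -> good (mixg s a b).
Proof.
move=> s01 [ga pa] [gb pb]; split; first exact: G1_mix.
move=> x hx; rewrite pig_mix; have := pa x hx; have := pb x hx.
case/andP: s01 => s0 s1 h1 h2.
have e1 : 0 <= (1 - s) * pi_g pih a x by apply: mulr_ge0; lra.
have e2 : 0 <= s * pi_g pih b x by apply: mulr_ge0 => //; apply: ltW.
have [->|sn] := eqVneq s 0; first by rewrite subr0 mul1r mul0r addr0.
have : 0 < s * pi_g pih b x by apply: mulr_gt0 => //; rewrite lt_neqAle eq_sym sn.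
lra.
Qed.

Lemma good_mix' s a b : 0 < s <= 1 -> G1 ph pih a -> good b -> good (mixg s a b).
Proof.
move=> /andP[s0 s1] ga [gb pb]; split; first by apply: G1_mix => //; rewrite s1 ltW.
move=> x hx; rewrite pig_mix.
have e1 : 0 <= (1 - s) * pi_g pih a x.
  by apply: mulr_ge0; [lra|apply: pig_ge0 => //; case: ga].
have : 0 < s * pi_g pih b x by apply: mulr_gt0 => //; apply: pb.
lra.
Qed.

Lemma Fk_convex k s a b : 0 <= s <= 1 ->
  (forall x, 0 < ph k x -> 0 < pi_g pih a x /\ 0 < pi_g pih b x) ->
  Fk k (mixg s a b) <= (1 - s) * Fk k a + s * Fk k b.
Proof.
move=> s01 H; rewrite /Fk.
have -> : pi_g pih (mixg s a b) =
   (fun x => (1 - s) * pi_g pih a x + s * pi_g pih b x).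
  by apply: funext => x; rewrite pig_mix.
exact: kl_convex.
Qed.

Lemma Fk_convex_good k s a b : 0 <= s <= 1 -> good a -> good b ->
  Fk k (mixg s a b) <= (1 - s) * Fk k a + s * Fk k b.
Proof.
move=> s01 [_ pa] [_ pb]; apply: Fk_convex => // x hx.
by split; [apply: pa|apply: pb]; apply: inX0 hx.
Qed.

Definition gsig : T -> 'I_p -> R := fun _ k => sigma eps k.

Lemma sumexp_gt0 : 0 < \sum_j expR (eps j).
Proof.
rewrite (bigD1 (Ordinal p0)) //=; apply: ltr_pwDl; first exact: expR_gt0.
by apply: sumr_ge0 => j _; apply: ltW; apply: expR_gt0.
Qed.

Lemma sigma_pos k : 0 < sigma eps k.
Proof. by rewrite /sigma; apply: divr_gt0; [apply: expR_gt0|apply: sumexp_gt0]. Qed.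

Lemma sigma_sum : \sum_k sigma eps k = 1.
Proof.
by rewrite /sigma -mulr_suml divff // lt0r_neq0 // sumexp_gt0.
Qed.

Lemma sigma_le1 k : sigma eps k <= 1.
Proof.
rewrite -sigma_sum (bigD1 k) //= lerDl; apply: sumr_ge0 => j _.
exact: ltW (sigma_pos j).
Qed.

Lemma good_gsig : good gsig.
Proof.
split; first split.
- move=> x _; split; last exact: sigma_sum.
  by move=> k; rewrite /gsig (ltW (sigma_pos k)) sigma_le1.
- rewrite /Z_g /pi_g /gsig exchange_big /=.
  rewrite -[RHS]sigma_sum; apply: eq_bigr => k _.
  rewrite -mulr_sumr; case: (hpih k) => _ [_ ->]; exact: mulr1.
- move=> x /[dup] hx; rewrite inE => /existsP [k hk].
  rewrite /pi_g (bigD1 k) //=; apply: ltr_pwDl.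
    by apply: mulr_gt0; [apply: sigma_pos|apply: pih_pos].
  apply: sumr_ge0 => j _; apply: mulr_ge0; [exact: ltW (sigma_pos j)|exact: pih_ge0].
Qed.


Lemma kl_all (P Q : T -> R) : (forall x, 0 <= P x) ->
  kl P Q = \sum_x P x * ln (P x / Q x).
Proof.
move=> h; rewrite /kl big_mkcond /=; apply: eq_bigr => x _.
case: ifP => // hx.
have : P x = 0 by apply/eqP; rewrite eq_le h andbT leNgt hx.
by move=> ->; rewrite mul0r.
Qed.

Lemma term_ge (l : R) (P Q : T -> R) : 0 <= l ->
  ((l * kl P Q)%:E <= l%:E * KL P Q)%E.
Proof.
move=> l0; rewrite /KL; case: ifP => _; last by rewrite EFinM.
have [->|lp] := eqVneq l 0; first by rewrite mul0r mul0e.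
have l1 : 0 < l by rewrite lt_neqAle eq_sym lp l0.
by rewrite mulry gtr0_sg // mul1e leey.
Qed.

Lemma Ltilde_ge (l : 'I_p -> R) g : (forall k, 0 <= l k) ->
  ((\sum_k l k * Fk k g)%:E <= Ltilde ph pih l g)%E.
Proof.
move=> l0; rewrite /Ltilde -sumEFin; apply: lee_sum => k _; exact: term_ge.
Qed.

Lemma Ltilde_inf (l : 'I_p -> R) g k : (forall k, 0 <= l k) -> 0 < l k ->
  KL (ph k) (pi_g pih g) = +oo%E -> Ltilde ph pih l g = +oo%E.
Proof.
move=> l0 lk hk; apply/eqP; rewrite -leye_eq.
rewrite /Ltilde (bigD1 k) //= hk mulry gtr0_sg // mul1e.
have := @lee_sum R _ (fun j => ((l j * Fk j g)%:E)) (fun j => ((l j)%:E * KL (ph j) (pi_g pih g))%E) (index_enum 'I_p) (fun j => j != k) (fun j _ => term_ge (ph j) (pi_g pih g) (l0 j)).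
rewrite sumEFin => h; apply: le_trans (leeD2l _ h).
by rewrite addye.
Qed.

Lemma Ltilde_fin (l : 'I_p -> R) g : (forall k, 0 <= l k) ->
  (forall k, 0 < l k -> forall x, 0 < ph k x -> pi_g pih g x != 0) ->
  Ltilde ph pih l g = (\sum_k l k * Fk k g)%:E.
Proof.
move=> l0 H; rewrite /Ltilde -sumEFin; apply: eq_bigr => k _.
have [->|lp] := eqVneq (l k) 0; first by rewrite mul0r mul0e.
have l1 : 0 < l k by rewrite lt_neqAle eq_sym lp l0.
by rewrite (KL_fin (H k l1)) EFinM.
Qed.

Lemma mix_ge0 (l : 'I_p -> R) x : (forall k, 0 <= l k) -> 0 <= mix l ph x.
Proof. by move=> l0; apply: sumr_ge0 => k _; apply: mulr_ge0 => //; apply: ph_ge0. Qed.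

Lemma mix_ge (l : 'I_p -> R) k x : (forall k, 0 <= l k) -> l k * ph k x <= mix l ph x.
Proof.
move=> l0; rewrite /mix (bigD1 k) //= lerDl; apply: sumr_ge0 => j _.
by apply: mulr_ge0 => //; apply: ph_ge0.
Qed.

Lemma Hcond_fin (l : 'I_p -> R) : Hcond l eps ph pih =
  (\sum_k l k * \sum_(x | 0 < ph k x)
     ph k x * - ln (sigma eps k * pih k x / mix (sigma eps) pih x))%:E.
Proof.
rewrite /Hcond -sumEFin; apply: eq_bigr => k _.
rewrite EFinM -sumEFin; congr (_ * _)%E; apply: eq_bigr => x hx.
by rewrite (negbTE (lt0r_neq0 (pih_pos hx))) EFinM.
Qed.

Lemma kl_pih k : kl (ph k) (pih k) <= eps k.
Proof.
have := heps k; rewrite KL_fin ?lee_fin //.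
by move=> x hx; apply: lt0r_neq0; apply: pih_pos.
Qed.

Lemma sum_ph k : \sum_(x | 0 < ph k x) ph k x = 1.
Proof.
case: (hph k) => h0 <-; rewrite big_mkcond /=; apply: eq_bigr => x _.
case: ifP => // hx; apply/eqP; rewrite eq_le h0 /= leNgt hx //.
Qed.

Lemma ln_sigma k : ln (sigma eps k) = eps k - ln (\sum_j expR (eps j)).
Proof. by rewrite /sigma ln_div ?posrE ?expR_gt0 ?sumexp_gt0 // expRK. Qed.

Lemma gsig_bound k : Fk k gsig +
   \sum_(x | 0 < ph k x) ph k x * - ln (sigma eps k * pih k x / mix (sigma eps) pih x)
   <= ln (\sum_j expR (eps j)).
Proof.
have e : Fk k gsig + \sum_(x | 0 < ph k x) ph k x *
    - ln (sigma eps k * pih k x / mix (sigma eps) pih x) =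
    kl (ph k) (pih k) - ln (sigma eps k) * \sum_(x | 0 < ph k x) ph k x.
  rewrite /Fk /kl -big_split mulr_sumr -sumrB; apply: eq_bigr => x hx /=.
  have q0 := pih_pos hx.
  have m0 : 0 < mix (sigma eps) pih x by case: good_gsig => _; apply; apply: inX0 hx.
  have s0 := sigma_pos k.
  rewrite /pi_g /gsig -/(mix (sigma eps) pih x).
  have e1 : ln (sigma eps k * pih k x / mix (sigma eps) pih x) =
     ln (sigma eps k) + ln (pih k x) - ln (mix (sigma eps) pih x).
    have sp : sigma eps k * pih k x \in Num.pos by rewrite posrE mulr_gt0.
    rewrite (ln_div sp); last by rewrite posrE.
    by rewrite lnM // posrE.
  have e2 : ln (ph k x / mix (sigma eps) pih x) = ln (ph k x) - ln (mix (sigma eps) pih x).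
    by rewrite ln_div ?posrE.
  have e3 : ln (ph k x / pih k x) = ln (ph k x) - ln (pih k x).
    by rewrite ln_div ?posrE.
  rewrite e1 e2 e3; ring.
rewrite e sum_ph mulr1 ln_sigma; have := kl_pih k; lra.
Qed.

Lemma bound_sig (l : 'I_p -> R) : simplex l ->
  (Ltilde ph pih l gsig <= (ln (\sum_j expR (eps j)))%:E - Hcond l eps ph pih)%E.
Proof.
move=> [l0 l1]; rewrite Ltilde_good; last exact: good_gsig.
rewrite Hcond_fin -EFinB lee_fin -[X in X - _]mul1r -l1 mulr_suml -sumrB.
apply: ler_sum => k _; rewrite -mulrBr; apply: ler_wpM2l => //.
have := gsig_bound k; lra.
Qed.

Lemma kl_decomp (l : 'I_p -> R) (Q : T -> R) : (forall k, 0 <= l k) ->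
  (forall k, 0 < l k -> forall x, 0 < ph k x -> 0 < Q x) ->
  \sum_k l k * kl (ph k) Q = kl (mix l ph) Q + \sum_k l k * kl (ph k) (mix l ph).
Proof.
move=> l0 HQ.
rewrite (kl_all _ (fun x => mix_ge0 x l0)).
have -> : \sum_x mix l ph x * ln (mix l ph x / Q x) =
   \sum_k l k * \sum_x ph k x * ln (mix l ph x / Q x).
  rewrite /mix; under eq_bigr => x _ do rewrite mulr_suml.
  rewrite exchange_big /=; apply: eq_bigr => k _.
  by rewrite mulr_sumr; apply: eq_bigr => x _; rewrite mulrA.
rewrite -big_split /=; apply: eq_bigr => k _.
rewrite -mulrDr !kl_all; try exact: ph_ge0.
have [->|lp] := eqVneq (l k) 0; first by rewrite !mul0r.
have l1 : 0 < l k by rewrite lt_neqAle eq_sym lp l0.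
congr (_ * _); rewrite -big_split /=; apply: eq_bigr => x _.
have [hx|hx] := ltP 0 (ph k x); last first.
  have -> : ph k x = 0 by apply/eqP; rewrite eq_le hx ph_ge0.
  by rewrite !mul0r addr0.
have q0 := HQ k l1 x hx.
have m0 : 0 < mix l ph x by apply: lt_le_trans (mix_ge k x l0); apply: mulr_gt0.
rewrite -mulrDr !ln_div ?posrE //; congr (_ * _); ring.
Qed.

Lemma bound_main lstar gstar : saddle ph pih lstar gstar ->
  forall l, simplex l ->
  (KL (mix l ph) (pi_g pih gstar)
     <= (ln (\sum_k expR (eps k)))%:E - Hcond lstar eps ph pih - JSD l ph)%E.
Proof.
move=> [sls [gg Zg] hl hg] l [l0 l1].
have hb : (Ltilde ph pih l gstar <=
    ((ln (\sum_k expR (eps k))) - (\sum_k lstar k * \sum_(x | 0 < ph k x)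
     ph k x * - ln (sigma eps k * pih k x / mix (sigma eps) pih x)))%:E)%E.
  rewrite EFinB -Hcond_fin; apply: le_trans (hl l (conj l0 l1)) _.
  apply: le_trans (hg gsig (proj1 good_gsig)) _.
  exact: bound_sig.
have pos : forall k, 0 < l k -> forall x, 0 < ph k x -> pi_g pih gstar x != 0.
  move=> k lk x hx; apply/negP => /eqP h0.
  by have := hb; rewrite (Ltilde_inf (g:=gstar) l0 lk (KL_inf hx h0)).
have pos' : forall k, 0 < l k -> forall x, 0 < ph k x -> 0 < pi_g pih gstar x.
  move=> k lk x hx; rewrite lt_neqAle eq_sym (pos k lk x hx) /=.
  by apply: pig_ge0 => //; apply: inX0 hx.
rewrite (@Ltilde_fin l gstar l0 pos) lee_fin in hb.
have -> : JSD l ph = (\sum_k l k * kl (ph k) (mix l ph))%:E.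
  rewrite /JSD -sumEFin; apply: eq_bigr => k _.
  have [->|lp] := eqVneq (l k) 0; first by rewrite mul0r mul0e.
  have lk : 0 < l k by rewrite lt_neqAle eq_sym lp l0.
  rewrite KL_fin ?EFinM // => x hx; apply: lt0r_neq0.
  by apply: lt_le_trans (mix_ge k x l0); apply: mulr_gt0.
rewrite KL_fin; last first.
  move=> x hm; apply/negP => /eqP h0.
  suff : mix l ph x = 0 by move=> e; rewrite e ltxx in hm.
  rewrite /mix big1 // => k _.
  have [lk|lk] := ltP 0 (l k); last first.
    have -> : l k = 0 by apply/eqP; rewrite eq_le lk l0.
    by rewrite mul0r.
  have [hx|hx] := ltP 0 (ph k x).
    by have := pos k lk x hx; rewrite h0 eqxx.
  have -> : ph k x = 0 by apply/eqP; rewrite eq_le hx ph_ge0.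
  by rewrite mulr0.
rewrite Hcond_fin -!EFinB lee_fin.
have := kl_decomp l0 pos'.
rewrite /Fk in hb.
lra.
Qed.


Lemma fan_ord (V : Type) (C : set V) (F : 'I_p -> V -> R) (v : R) :
  (forall a b, C a -> C b -> forall s, 0 <= s <= 1 -> exists z, C z /\
     forall k, F k z <= (1-s) * F k a + s * F k b) ->
  (forall c, C c -> exists k, v <= F k c) ->
  exists l : 'I_p -> R, simplex l /\ forall c, C c -> v <= \sum_k l k * F k c.
Proof.
move: F; case: p p0 => // n _ F cvx cov.
have [l [l0 [l1 lC]]] := @fan R V n C (fun k => F (inord k)) v
  (fun a b Ca Cb s s01 => let: ex_intro z (conj Cz hz) := cvx a b Ca Cb s s01 in
     ex_intro _ z (conj Cz (fun k _ => hz (inord k))))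
  (fun c Cc => let: ex_intro k hk := cov c Cc in
     ex_intro _ (nat_of_ord k) (conj (ltn_ord k) (eq_ind _ (fun y => v <= F y c) hk _ (esym (inord_val k))))).
exists (fun k => l k); split; first by split.
move=> c Cc; have := lC c Cc.
by under eq_bigr => k _ do rewrite inord_val.
Qed.

Lemma lim_mix (v A B : R) : (forall t, 0 < t <= 1 -> v <= (1 - t) * A + t * B) -> v <= A.
Proof.
move=> H; rewrite leNgt; apply/negP => hA.
set M := Num.max 0 (B - A) + 1.
have M1 : 1 <= M by rewrite /M lerDr le_max lexx.
have BM : B - A <= M - 1 by rewrite /M addrK le_max lexx orbT.
set t := (v - A) / (v - A + M).
have tp : 0 < t by rewrite /t divr_gt0 //; lra.
have t1 : t <= 1 by rewrite /t ler_pdivrMr; lra.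
have ht : t * (v - A + M) = v - A by rewrite /t mulrAC -mulrA divff ?mulr1 //; lra.
have := H t (introT andP (conj tp t1)).
have : t * (B - A) <= t * (M - 1) by apply: ler_wpM2l => //; apply: ltW.
nra.
Qed.

Lemma lb_pos (I : finType) (P : pred I) (f : I -> R) :
  (forall i, P i -> 0 < f i) -> exists m, 0 < m /\ forall i, P i -> m <= f i.
Proof.
move=> H; set S := \sum_(i | P i) (f i)^-1.
have S0 : 0 <= S by apply: sumr_ge0 => i Pi; rewrite invr_ge0 ltW // H.
exists (1 + S)^-1; split; first by rewrite invr_gt0; lra.
move=> i Pi; have fi := H i Pi.
rewrite -[f i]invrK lef_pV2 ?posrE ?invr_gt0 //; last lra.
rewrite /S (bigD1 i) //=.
have : 0 <= \sum_(j | P j && (j != i)) (f j)^-1.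
  by apply: sumr_ge0 => j /andP[Pj _]; rewrite invr_ge0 ltW // H.
lra.
Qed.

Definition k0 : 'I_p := Ordinal p0.
Definition Phi (g : T -> 'I_p -> R) : R := \big[Num.max/Fk k0 g]_(k < p) Fk k g.

Lemma Phi_ge g j : Fk j g <= Phi g.
Proof. exact: le_bigmax. Qed.

Lemma Phi_att g : exists k, Phi g = Fk k g.
Proof.
rewrite /Phi; apply: (big_ind (fun y => exists k, y = Fk k g)).
- by exists k0.
- move=> a b [i ->] [j ->]; rewrite /Num.max; case: ifP => _.
    by exists j.
  by exists i.
- by move=> k _; exists k.
Qed.

Definition Hk k := \sum_(y | 0 < ph k y) ph k y * ln (ph k y).

Lemma lower_bound g x k d : good g -> 0 < ph k x -> pi_g pih g x < d ->
  Hk k - ph k x * ln d <= Fk k g.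
Proof.
move=> gg hx hd.
have pos y : 0 < ph k y -> 0 < pi_g pih g y by move=> hy; apply: gg.2; apply: inX0 hy.
have le1 y : 0 < ph k y -> pi_g pih g y <= 1 by move=> hy; apply: pig_le1 gg.1 _ (inX0 hy).
have -> : Fk k g = Hk k + \sum_(y | 0 < ph k y) ph k y * - ln (pi_g pih g y).
  rewrite /Fk /kl /Hk -big_split; apply: eq_bigr => y hy /=.
  by rewrite ln_div ?posrE ?pos //; ring.
rewrite lerD2l (bigD1 x) //= -mulrN.
have : 0 <= \sum_(y | (0 < ph k y) && (y != x)) ph k y * - ln (pi_g pih g y).
  apply: sumr_ge0 => y /andP[hy _]; apply: mulr_ge0; first exact: ltW.
  by rewrite oppr_ge0; apply: ln_le0; apply: le1.
have : ph k x * - ln d <= ph k x * - ln (pi_g pih g x).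
  apply: ler_wpM2l; first exact: ltW.
  rewrite lerN2 ler_ln ?posrE ?pos //; first exact: ltW.
  exact: lt_trans (pos x hx) hd.
lra.
Qed.

Notation W := (prod_topology (fun _ : (T * 'I_p)%type => R)).
Definition gate_of (G : W) : T -> 'I_p -> R := fun x k => G (x, k).

Lemma contPi x (G : W) : {for G, continuous (fun H : W => pi_g pih (gate_of H) x)}.
Proof.
apply: cont_sum => k _; apply: cont_mul; first exact: cont_proj.
exact: cont_cst.
Qed.

Lemma contF k (G : W) : (forall x, 0 < ph k x -> 0 < pi_g pih (gate_of G) x) ->
  {for G, continuous (fun H : W => Fk k (gate_of H))}.
Proof.
move=> hG; apply: cont_sum => x hx.
apply: cont_mul; first exact: cont_cst.
apply: cont_ln; first by apply: divr_gt0 => //; apply: hG.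
apply: cont_mul; first exact: cont_cst.
apply: cont_inv; first by apply: lt0r_neq0; apply: hG.
exact: contPi.
Qed.


Lemma minimizer : exists gs, good gs /\ exists v,
  (forall j, Fk j gs <= v) /\ (forall g, good g -> exists k, v <= Fk k g).
Proof.
have [m [m0 hm]] := @lb_pos _ (fun kx : 'I_p * T => 0 < ph kx.1 kx.2)
   (fun kx => ph kx.1 kx.2) (fun i h => h).
have [d0 [d00 hd0]] := @lb_pos _ (fun x => x \in X0 ph) (pi_g pih gsig)
   (fun x hx => good_gsig.2 x hx).
set B := `|Phi gsig| + \sum_k `|Hk k|.
have B0 : 0 <= B by rewrite /B addr_ge0 // sumr_ge0.
set d1 := expR (- (B / m)).
set d := Num.min d0 d1.
have d1p : 0 < d1 by apply: expR_gt0.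
have dp : 0 < d by rewrite /d /Num.min; case: ifP.
have dd0 : d <= d0 by rewrite /d /Num.min; case: ifP => // /negbT; rewrite -leNgt.
have dd1 : d <= d1 by rewrite /d /Num.min; case: ifP => // h; apply: ltW.
have lnd : ln d <= - (B / m).
  by rewrite -[X in _ <= X]expRK -/d1 ler_ln ?posrE.
have key g : good g -> forall x, x \in X0 ph -> pi_g pih g x < d ->
    exists k, Phi gsig <= Fk k g.
  move=> gg x hx hd; move: (hx); rewrite inE => /existsP [k hk].
  exists k; apply: le_trans (lower_bound gg hk hd).
  have mk : m <= ph k x by apply: (hm (k, x)).
  have Bm : B <= ph k x * - ln d.
    have e : B = m * (B / m) by rewrite mulrCA divff ?mulr1 // lt0r_neq0.
    rewrite [leLHS]e; apply: ler_pM; [exact: ltW|apply: divr_ge0 => //; exact: ltW|exact: mk|].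
    by rewrite lerNr.
  have hB : Phi gsig - Hk k <= B.
    have : `|Hk k| <= \sum_k `|Hk k|.
      by rewrite (bigD1 k) //= lerDl sumr_ge0.
    have := ler_norm (Phi gsig).
    have := ler_norm (- Hk k); rewrite normrN; rewrite /B; lra.
  lra.
pose K := [set G : W | (forall u, 0 <= G u /\ G u <= 1) /\
  (forall x, x \in X0 ph -> \sum_k G (x, k) = 1) /\
  Z_g ph pih (gate_of G) = 1 /\
  (forall x, x \in X0 ph -> d <= pi_g pih (gate_of G) x)]%classic.
have Kgood G : K G -> good (gate_of G).
  move=> [h1 [h2 [h3 h4]]]; split; first split => //.
    move=> x hx; split; last exact: h2.
    by move=> k; have [a b] := h1 (x, k); rewrite /gate_of a b.
  by move=> x hx; apply: lt_le_trans dp (h4 x hx).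
pose Gs : W := fun u => sigma eps u.2.
have KGs : K Gs.
  have [[g1 g2] g3] := good_gsig; split; last split; last split.
  - by move=> u; split; [apply: ltW; apply: sigma_pos|apply: sigma_le1].
  - by move=> x hx; apply: sigma_sum.
  - exact: g2.
  - by move=> x hx; apply: le_trans dd0 (hd0 x hx).
have Kcl : closed K.
  apply: (@closedI _ [set G : W | forall u, 0 <= G u /\ G u <= 1]%classic).
    apply: (@closed_all _ _ _ (fun u => [set G : W | 0 <= G u /\ G u <= 1]%classic)) => u.
    apply: (@closedI _ [set G : W | 0 <= G u]%classic [set G : W | G u <= 1]%classic).
      apply: (@closed_pre _ _ (fun G : W => G u) [set y | 0 <= y]%classic).
        by move=> G; exact: cont_proj.
      exact: closed_ge.
    apply: (@closed_pre _ _ (fun G : W => G u) [set y | y <= 1]%classic).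
      by move=> G; exact: cont_proj.
    exact: closed_le.
  apply: (@closedI _ [set G : W | forall x, x \in X0 ph -> \sum_k G (x, k) = 1]%classic).
    apply: (@closed_forall _ _ _ (fun x => x \in X0 ph) (fun x => [set G : W | \sum_k G (x, k) = 1]%classic)) => x _.
    apply: (@closed_pre _ _ (fun G : W => \sum_k G (x, k)) [set y | y = 1]%classic).
      by move=> G; apply: cont_sum => k _; exact: cont_proj.
    exact: closed_eq.
  apply: (@closedI _ [set G : W | Z_g ph pih (gate_of G) = 1]%classic).
    apply: (@closed_pre _ _ (fun G : W => Z_g ph pih (gate_of G)) [set y | y = 1]%classic).
      by move=> G; apply: cont_sum => x _; exact: contPi.
    exact: closed_eq.
  apply: (@closed_forall _ _ _ (fun x => x \in X0 ph) (fun x => [set G : W | d <= pi_g pih (gate_of G) x]%classic)) => x _.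
  apply: (@closed_pre _ _ (fun G : W => pi_g pih (gate_of G) x) [set y | d <= y]%classic).
    by move=> G; exact: contPi.
  exact: closed_ge.
have Kcont G : K G -> {for G, continuous (fun H : W => Phi (gate_of H))}.
  move=> KG; have [_ pG] := Kgood G KG.
  have hc k : {for G, continuous (fun H : W => Fk k (gate_of H))}.
    by apply: contF => x hx; apply: pG; apply: inX0 hx.
  exact: cont_bigmax.
have Kbox : (K `<=` [set G : W | forall u, 0 <= G u <= 1])%classic.
  by move=> G KG u /=; case: (proj1 KG u) => a b; rewrite a b.
have [G0 [KG0 G0min]] := min_exists (ex_intro _ Gs KGs) Kcl Kbox Kcont.
exists (gate_of G0); split; first exact: Kgood.
exists (Phi (gate_of G0)); split; first by move=> j; apply: Phi_ge.
move=> g gg.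
case: (pselect (forall x, x \in X0 ph -> d <= pi_g pih g x)) => hd.
  pose G : W := fun u => if u.1 \in X0 ph then g u.1 u.2 else 0.
  have epi : pi_g pih (gate_of G) = pi_g pih g.
    apply: funext => x; rewrite /pi_g /gate_of /G /=.
    have [hx|hx] := boolP (x \in X0 ph).
      by [].

    by rewrite !big1 // => k _; rewrite notX0_pih // mulr0.
  have KG : K G.
    split; last split; last split.
    - move=> [x k]; rewrite /G /=; case: ifP => hx; last by split; [|apply: ler01].
      by have [h _] := gg.1.1 x hx; have /andP[a b] := h k.
    - by move=> x hx; rewrite /G /= hx; have [_ h] := gg.1.1 x hx.
    - by rewrite /Z_g epi; exact: gg.1.2.
    - by move=> x hx; rewrite epi; apply: hd.
  have [k hk] := Phi_att g; exists k; rewrite -hk.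
  have : Phi (gate_of G) = Phi g by rewrite /Phi /Fk epi.
  by move=> <-; apply: G0min.
have [x [hx hdx]] : exists x, x \in X0 ph /\ pi_g pih g x < d.
  apply: contrapT => hn; apply: hd => x hx; rewrite leNgt; apply/negP => h.
  by apply: hn; exists x.
have [k hk] := key g gg x hx hdx; exists k.
apply: le_trans hk; exact: (G0min Gs KGs).
Qed.

Lemma saddle_exists : exists lstar gstar, saddle ph pih lstar gstar.
Proof.
have [gs [gsg [v [hv1 hv2]]]] := minimizer.
have [ls [[ls0 ls1] lsC]] := @fan_ord (T -> 'I_p -> R) good Fk v
  (fun a b ga gb s s01 => ex_intro _ (mixg s a b)
     (conj (good_mix s01 ga gb) (fun k => Fk_convex_good k s01 ga gb))) hv2.
have hv l : (forall k, 0 <= l k) -> \sum_k l k = 1 -> \sum_k l k * Fk k gs <= v.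
  move=> l0 l1; rewrite -[leRHS]mul1r -l1 mulr_suml; apply: ler_sum => k _.
  by apply: ler_wpM2l.
exists ls, gs; split => //.
- exact: gsg.1.
- move=> l [l0 l1]; rewrite !Ltilde_good // lee_fin.
  by apply: le_trans (lsC gs gsg); apply: hv.
- move=> g g1; rewrite Ltilde_good //.
  apply: le_trans (_ : (v%:E <= _)%E); first by rewrite lee_fin; apply: hv.
  case: (pselect (exists k, 0 < ls k /\ exists x, 0 < ph k x /\ pi_g pih g x = 0)).
    by move=> [k [lk [x [hx h0]]]]; rewrite (Ltilde_inf ls0 lk (KL_inf hx h0)) leey.
  move=> hn.
  have pos : forall k, 0 < ls k -> forall x, 0 < ph k x -> pi_g pih g x != 0.
    move=> k lk x hx; apply/negP => /eqP h0; apply: hn.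
    by exists k; split => //; exists x.
  rewrite (@Ltilde_fin ls g ls0 pos) lee_fin.
  apply: (@lim_mix _ _ (\sum_k ls k * Fk k gsig)) => t /andP[t0 t1].
  have gt : good (mixg t g gsig) by apply: good_mix' => //; [rewrite t0 t1|exact: good_gsig].
  apply: le_trans (lsC _ gt) _.
  rewrite !mulr_sumr -big_split; apply: ler_sum => k _ /=.
  have [->|lp] := eqVneq (ls k) 0; first by rewrite !mul0r !mulr0 addr0.
  have lk : 0 < ls k by rewrite lt_neqAle eq_sym lp ls0.
  rewrite mulrCA (mulrCA t) -mulrDr; apply: ler_wpM2l => //.
  apply: Fk_convex; first by rewrite ltW.
  move=> x hx; split.
    rewrite lt_neqAle eq_sym (pos k lk x hx) /=.
    by apply: pig_ge0; [exact: g1.1|apply: inX0 hx].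
  by apply: good_gsig.2; apply: inX0 hx.
Qed.
End Main.


Local Close Scope classical_set_scope.

Theorem mainTheorem5 (R : realType) (T : finType) (p : nat)
  (ph pih : 'I_p -> T -> R) (eps : 'I_p -> R) :
  (0 < p)%N ->
  (forall k, is_distr (ph k)) ->
  (forall k, distr_on (X0 ph) (pih k)) ->
  (forall k, (KL (ph k) (pih k) <= (eps k)%:E)%E) ->
  (exists lstar gstar, saddle ph pih lstar gstar) /\
  (forall lstar gstar, saddle ph pih lstar gstar ->
     forall l, simplex l ->
       (KL (mix l ph) (pi_g pih gstar)
          <= (ln (\sum_k expR (eps k)))%:E - Hcond lstar eps ph pih - JSD l ph)%E).
Proof.
move=> p0 hph hpih heps; split.
  by apply: saddle_exists.
by apply: bound_main.
Qed.
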